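(* Let $(g(x))_{x\ge0}$ be a semigroup acting on a real finite-dimensional vector space $V$, let $V=\bigoplus_{i=1}^nV_i$ be an SRPD, and let $V_i$ be a component of first type with eigenvalue $\lambda(x)$. Then there exists a nonzero $v\in V_i$ such that $g(x)v=\lambda(x)v$ for all $x>0$.
   Context: A semigroup is a map $g:[0,\infty)\to L(V)$ with $g(0)=\mathrm{id}$ and $g(x+y)=g(x)g(y)$ for all $x,y\ge0$. A simultaneous real primary decomposition (SRPD) is a decomposition $V=\bigoplus_{i=1}^nV_i$ into nonzero subspaces, each $g(x)$-invariant for all $x\ge0$, such that each $V_i$ is either of first type: for every $x\ge0$, $g(x)|_{V_i}$ has exactly one (complex) eigenvalue $\lambda(x)$, which is real and $\ge0$; or of second type: for every $x\ge 0$ the eigenvalues of $g(x)|_{V_i}$ lie in $\{\lambda(x),\overline{\lambda(x)}\}$ for some $\lambda(x)\in\mathbb C$, with $\lambda(x)\notin\mathbb R$ for some $x$. *)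

(* Defs.v *)
From HB Require Import structures.
From mathcomp Require Import all_boot all_order all_algebra.
From mathcomp Require Import reals.
From mathcomp Require Import complex.
Set Implicit Arguments. Unset Strict Implicit. Unset Printing Implicit Defensive.
Import Order.TTheory GRing.Theory Num.Theory.
Local Open Scope ring_scope.
Local Open Scope complex_scope.

(* Real vector space V = 'rV[R]_n (row vectors), linear maps = 'M[R]_n acting
   on the right: v |-> v *m A. Subspaces of V are represented by matrices
   (their row space), as in mxalgebra. *)

Definition cplx_mx (R : realType) (m p : nat) (A : 'M[R]_(m, p)) : 'M[R[i]]_(m, p) :=
  map_mx (fun r : R => r%:C) A.

(* z is a (complex) eigenvalue of the restriction of A to the A-invariant
   subspace W: there is a nonzero vector of the complexification of W
   that is an eigenvector of (the complexification of) A for z. *)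
Definition eigenvalue_restr (R : realType) (n : nat) (A : 'M[R]_n) (m : nat)
  (W : 'M[R]_(m, n)) (z : R[i]) : Prop :=
  exists2 v : 'rV[R[i]]_n, v != 0 &
    (v <= cplx_mx W)%MS /\ v *m cplx_mx A = z *: v.

(* Semigroup g : [0, oo) -> L(V). Values of g at negative arguments are irrelevant. *)
Definition is_semigroup (R : realType) (n : nat) (g : R -> 'M[R]_n) : Prop :=
  g 0 = 1%:M /\ forall x y, 0 <= x -> 0 <= y -> g (x + y) = g x *m g y.

Definition g_invariant (R : realType) (n : nat) (g : R -> 'M[R]_n) (m : nat)
  (W : 'M[R]_(m, n)) : Prop :=
  forall x, 0 <= x -> stablemx W (g x).

Definition first_type_with (R : realType) (n : nat) (g : R -> 'M[R]_n) (m : nat)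
  (W : 'M[R]_(m, n)) (lam : R -> R) : Prop :=
  forall x, 0 <= x -> 0 <= lam x /\
    (forall z, eigenvalue_restr (g x) W z <-> z = (lam x)%:C).

Definition first_type (R : realType) (n : nat) (g : R -> 'M[R]_n) (m : nat)
  (W : 'M[R]_(m, n)) : Prop :=
  exists lam : R -> R, first_type_with g W lam.

Definition second_type (R : realType) (n : nat) (g : R -> 'M[R]_n) (m : nat)
  (W : 'M[R]_(m, n)) : Prop :=
  exists lam : R -> R[i],
    (forall x, 0 <= x -> forall z, eigenvalue_restr (g x) W z ->
        z = lam x \/ z = conjc (lam x)) /\
    (exists x, 0 <= x /\ Im (lam x) != 0).

Definition SRPD (R : realType) (n : nat) (g : R -> 'M[R]_n) (k : nat)
  (Vs : 'I_k -> 'M[R]_n) : Prop :=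
  (forall i, Vs i != 0) /\
  mxdirect (\sum_(i < k) Vs i) /\
  ((\sum_(i < k) Vs i) :=: 1%:M)%MS /\
  (forall i, g_invariant g (Vs i)) /\
  (forall i, first_type g (Vs i) \/ second_type g (Vs i)).

(* Main.v *)
Require Import Defs.
From HB Require Import structures.
From mathcomp Require Import all_boot all_order all_algebra.
From mathcomp Require Import reals complex.
From Stdlib Require Import Classical.
Import Order.TTheory GRing.Theory Num.Theory.
Local Open Scope ring_scope.
Local Open Scope complex_scope.

Lemma cplx_eig (C : closedFieldType) n (A U : 'M[C]_n) :
  U != 0 -> stablemx U A ->
  exists2 v : 'rV[C]_n, v != 0 & (v <= U)%MS /\ exists z, v *m A = z *: v.
Proof.
move=> Unz sUA.
have rbf : row_free (row_base U) by exact: row_base_free.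
have rbU : (row_base U <= U)%MS by rewrite eq_row_base.
have Urb : (U <= row_base U)%MS by rewrite eq_row_base.
have rbA : (row_base U *m A <= row_base U)%MS.
  apply: submx_trans Urb; apply: submx_trans sUA.
  by apply: submxMr.
pose M := row_base U *m A *m pinvmx (row_base U).
have [a ra] : exists a, root (char_poly M) a.
  apply/closed_rootP; rewrite size_char_poly.
  by rewrite eqSS mxrank_eq0.
move: ra; rewrite -eigenvalue_root_char => /eigenvalueP [w wM wnz].
exists (w *m row_base U).
  by rewrite mulmx_free_eq0.
split; first by apply: submx_trans rbU; apply: submxMl.
exists a; rewrite -mulmxA -{1}(mulmxKpV rbA) -/M mulmxA wM.
by rewrite scalemxAl.
Qed.

Section Real.
Variable R : realType.

Lemma cplxE m p (M : 'M[R]_(m, p)) : cplx_mx M = map_mx (real_complex R) M.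
Proof. by []. Qed.

Lemma Re_mulmx m p q (w : 'M[R[i]]_(m, p)) (M : 'M[R]_(p, q)) :
  map_mx (@complex.Re R) (w *m cplx_mx M) = map_mx (@complex.Re R) w *m M.
Proof.
apply/matrixP => a b; rewrite !mxE.
elim/big_rec2: _ => [//|j x y _ IH].
rewrite !mxE -IH; case: (w a j) => p1 q1; case: y {IH} => c d /=.
by rewrite mulr0 subr0.
Qed.

Lemma Im_mulmx m p q (w : 'M[R[i]]_(m, p)) (M : 'M[R]_(p, q)) :
  map_mx (@complex.Im R) (w *m cplx_mx M) = map_mx (@complex.Im R) w *m M.
Proof.
apply/matrixP => a b; rewrite !mxE.
elim/big_rec2: _ => [//|j x y _ IH].
rewrite !mxE -IH; case: (w a j) => p1 q1; case: y {IH} => c d /=.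
by rewrite mulr0 add0r.
Qed.

Lemma Re_scale m p (c : R) (w : 'M[R[i]]_(m, p)) :
  map_mx (@complex.Re R) (c%:C *: w) = c *: map_mx (@complex.Re R) w.
Proof.
apply/matrixP => a b; rewrite !mxE; case: (w a b) => p1 q1 /=.
by rewrite mul0r subr0.
Qed.

Lemma Im_scale m p (c : R) (w : 'M[R[i]]_(m, p)) :
  map_mx (@complex.Im R) (c%:C *: w) = c *: map_mx (@complex.Im R) w.
Proof.
apply/matrixP => a b; rewrite !mxE; case: (w a b) => p1 q1 /=.
by rewrite mul0r addr0.
Qed.

Lemma real_eig n (A : 'M[R]_n) m (W : 'M[R]_(m, n)) (U : 'M[R]_n) (l : R) :
  U != 0 -> stablemx U A -> (U <= W)%MS ->
  (forall z, eigenvalue_restr A W z -> z = l%:C) ->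
  exists2 u : 'rV[R]_n, u != 0 & (u <= U)%MS /\ u *m A = l *: u.
Proof.
move=> Unz sUA UW hz.
have cUnz : cplx_mx U != 0 by rewrite cplxE map_mx_eq0.
have csUA : stablemx (cplx_mx U) (cplx_mx A).
  by rewrite !cplxE -map_mxM map_submx.
have [v vnz [vU [z vA]]] := @cplx_eig _ _ _ _ cUnz csUA.
have zl : z = l%:C.
  apply: hz; exists v => //; split => //.
  by apply: submx_trans vU _; rewrite !cplxE map_submx.
subst z.
have [D vD] := submxP vU.
have key : forall f : R[i] -> R, (f = @complex.Re R \/ f = @complex.Im R) ->
    (map_mx f v <= U)%MS /\ map_mx f v *m A = l *: map_mx f v.
  move=> f [->|->]; split.
  - by rewrite vD Re_mulmx submxMl.
  - by rewrite -Re_mulmx vA Re_scale.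
  - by rewrite vD Im_mulmx submxMl.
  - by rewrite -Im_mulmx vA Im_scale.
have [reZ|reNZ] := eqVneq (map_mx (@complex.Re R) v) 0; last first.
  by exists (map_mx (@complex.Re R) v) => //; apply: key; left.
have [imZ|imNZ] := eqVneq (map_mx (@complex.Im R) v) 0; last first.
  by exists (map_mx (@complex.Im R) v) => //; apply: key; right.
exfalso; move/eqP: vnz; apply; apply/matrixP => a b.
move/matrixP: reZ => /(_ a b); move/matrixP: imZ => /(_ a b).
rewrite !mxE; case: (v a b) => p1 q1 /= -> ->. by [].
Qed.
End Real.

Lemma main_ind (R : realType) n (g : R -> 'M[R]_n) (W : 'M[R]_n) (lam : R -> R) :
  is_semigroup g -> first_type_with g W lam ->
  forall r (U : 'M[R]_n), (\rank U <= r)%N -> U != 0 -> (U <= W)%MS ->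
  (forall y, 0 <= y -> stablemx U (g y)) ->
  exists2 v : 'rV[R]_n, v != 0 &
    (v <= U)%MS /\ (forall x, 0 < x -> v *m g x = lam x *: v).
Proof.
move=> [g0 gM] ft; elim=> [|r IH] U rU Unz UW sU.
  by move: rU; rewrite leqn0 mxrank_eq0 (negPf Unz).
have [[x [x0 [u [uU ux]]]]|H] := classic
  (exists x, 0 < x /\ exists u : 'rV[R]_n, (u <= U)%MS /\ u *m g x != lam x *: u);
  last first.
  exists (nz_row U); first by rewrite nz_row_eq0.
  split; first exact: nz_row_sub.
  move=> x x0; apply/eqP; apply/negPn/negP => hne; apply: H.
  by exists x; split => //; exists (nz_row U); split => //; exact: nz_row_sub.
have comm : forall y, 0 <= y -> g y *m g x = g x *m g y.
  move=> y y0; have x0' := ltW x0.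
  by rewrite -gM // -[g x *m _]gM // addrC.
pose K := kermx (g x - (lam x)%:M).
pose U' := (U :&: K)%MS.
have U'U : (U' <= U)%MS by exact: capmxSl.
have U'K : (U' *m (g x - (lam x)%:M) == 0) by rewrite -sub_kermx capmxSr.
have [u0 u0nz [u0U u0x]] := @real_eig _ _ _ _ _ _ _ Unz (sU x (ltW x0)) UW
  (fun z hz => proj1 (proj2 (ft x (ltW x0)) z) hz).
have U'nz : U' != 0.
  apply: contraNneq u0nz => U'0.
  have : (u0 <= U')%MS.
    rewrite sub_capmx u0U sub_kermx mulmxBr u0x mul_mx_scalar subrr.
    by rewrite eqxx.
  by rewrite U'0 submx0 => ->.
have [v vnz [vU' vx]] : exists2 v : 'rV[R]_n, v != 0 &
    (v <= U')%MS /\ (forall x, 0 < x -> v *m g x = lam x *: v); last first.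
  by exists v => //; split => //; exact: submx_trans U'U.
apply: (IH U') => //.
- have := mxrank_leqif_sup U'U; case=> le eq.
  rewrite -ltnS; apply: leq_trans rU; rewrite ltn_neqAle le andbT eq.
  apply: contra ux => UU'.
  have : (u *m (g x - (lam x)%:M) == 0).
    by rewrite -sub_kermx (submx_trans uU) // (submx_trans UU') // capmxSr.
  by rewrite mulmxBr mul_mx_scalar subr_eq0.
- exact: submx_trans UW.
- move=> y y0; rewrite sub_capmx; apply/andP; split.
    by apply: submx_trans (sU y y0); apply: submxMr.
  rewrite sub_kermx -mulmxA mulmxBr comm // mul_mx_scalar.
  by rewrite -mul_scalar_mx -mulmxBl mulmxA (eqP U'K) mul0mx.
Qed.

Theorem mainTheorem3 (R : realType) (n : nat) (g : R -> 'M[R]_n)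
  (k : nat) (Vs : 'I_k -> 'M[R]_n) (i : 'I_k) (lam : R -> R) :
  is_semigroup g -> SRPD g Vs -> first_type_with g (Vs i) lam ->
  exists2 v : 'rV[R]_n, v != 0 &
    (v <= Vs i)%MS /\ (forall x, 0 < x -> v *m g x = lam x *: v).
Proof.
move=> sg [nz [_ [_ [inv _]]]] ft.
exact: (@main_ind R n g (Vs i) lam sg ft (\rank (Vs i)) (Vs i) (leqnn _) (nz i) (submx_refl _) (inv i)).
Qed.
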